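(* Let $n\ge2$ and let $(x_j)_{j\in J}$ be a finite frame of $\mathbb C^n$. Suppose that $x,y\in\mathbb C^n$ are linearly independent and that $\langle x,x_j\rangle$ and $\langle y,x_j\rangle$ are real for all $j\in J$. Then there exists $z\in\operatorname{span}\{x,y\}$ such that $(x_j)_{j\in J}$ does not do stable phase retrieval near $z$.
   Context: A finite frame $(x_j)_{j\in J}$ of $\mathbb C^n$ satisfies $A\|x\|^2\le\sum_{j}|\langle x,x_j\rangle|^2\le B\|x\|^2$ for some $B\ge A>0$; its analysis operator is $\Theta(x)=(\langle x,x_j\rangle)_{j\in J}$ and $|\Theta x|=(|\langle x,x_j\rangle|)_{j\in J}$. For $x,y$ with $x\neq\lambda y$ for all $|\lambda|=1$, set $\Psi(x,y)=\||\Theta x|-|\Theta y|\|/\min_{|\lambda|=1}\|x-\lambda y\|$. For $C>0$, the frame does $C$-stable phase retrieval near $z$ if $\liminf_{w\to z,\ w\notin\{\lambda z:|\lambda|=1\}} C\,\Psi(z,w)\ge1$, and does stable phase retrieval near $z$ if this holds for some $C>0$. *)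

(* Defs.v *)
From HB Require Import structures.
From mathcomp Require Import all_boot all_order all_algebra.
From mathcomp Require Import complex.
From mathcomp Require Import boolp classical_sets reals.
Set Implicit Arguments. Unset Strict Implicit. Unset Printing Implicit Defensive.
Import Order.TTheory GRing.Theory Num.Theory.
Local Open Scope ring_scope.
Local Open Scope complex_scope.
Local Open Scope classical_set_scope.

Section Defs.
Variables (R : realType) (n : nat).

Definition cmod (z : R[i]) : R := Num.sqrt (complex.Re z ^+ 2 + complex.Im z ^+ 2).

Definition cip (u v : 'rV[R[i]]_n) : R[i] := \sum_(k < n) u 0 k * (v 0 k)^*.

Definition vnorm (u : 'rV[R[i]]_n) : R := Num.sqrt (\sum_(k < n) cmod (u 0 k) ^+ 2).

Variable J : finType.

Definition is_frame (xs : J -> 'rV[R[i]]_n) : Prop :=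
  exists A B : R, 0 < A /\ A <= B /\
    forall x : 'rV[R[i]]_n,
      A * vnorm x ^+ 2 <= \sum_(j : J) cmod (cip x (xs j)) ^+ 2 /\
      \sum_(j : J) cmod (cip x (xs j)) ^+ 2 <= B * vnorm x ^+ 2.

Definition absTheta (xs : J -> 'rV[R[i]]_n) (x : 'rV[R[i]]_n) : J -> R :=
  fun j => cmod (cip x (xs j)).

Definition rdist (a b : J -> R) : R := Num.sqrt (\sum_(j : J) (a j - b j) ^+ 2).

(* min_{|lambda| = 1} || x - lambda y || (the infimum is attained) *)
Definition phase_dist (x y : 'rV[R[i]]_n) : R :=
  inf [set vnorm (x - l *: y) | l in [set l : R[i] | cmod l = 1]].

Definition same_phase_class (x y : 'rV[R[i]]_n) : Prop :=
  exists l : R[i], cmod l = 1 /\ x = l *: y.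

Definition Psi (xs : J -> 'rV[R[i]]_n) (x y : 'rV[R[i]]_n) : R :=
  rdist (absTheta xs x) (absTheta xs y) / phase_dist x y.

(* liminf_{w -> z, w not in {lambda z : |lambda|=1}} C Psi(z,w) >= 1,
   written out: for every eps > 0 there is a punctured neighbourhood
   on which C Psi(z,w) >= 1 - eps. *)
Definition C_stable_near (xs : J -> 'rV[R[i]]_n) (C : R) (z : 'rV[R[i]]_n) : Prop :=
  forall eps : R, 0 < eps -> exists delta : R, 0 < delta /\
    forall w : 'rV[R[i]]_n, vnorm (w - z) < delta -> ~ same_phase_class w z ->
      1 - eps <= C * Psi xs z w.

Definition stable_near (xs : J -> 'rV[R[i]]_n) (z : 'rV[R[i]]_n) : Prop :=
  exists C : R, 0 < C /\ C_stable_near xs C z.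

End Defs.

(* Main.v *)
Require Import Defs.
From HB Require Import structures.
From mathcomp Require Import all_boot all_order all_algebra.
From mathcomp Require Import complex.
From mathcomp Require Import boolp classical_sets reals.
From mathcomp Require Import ring lra.
Import Order.TTheory GRing.Theory Num.Theory.
Local Open Scope ring_scope.
Local Open Scope complex_scope.
Set Implicit Arguments. Unset Strict Implicit.
Section H.
Variables (R : realType) (n : nat).

Lemma cmod_sq (z : R[i]) : cmod z ^+ 2 = complex.Re z ^+ 2 + complex.Im z ^+ 2.
Proof. by rewrite /cmod sqr_sqrtr // addr_ge0 // sqr_ge0. Qed.

Lemma cmod_ge0 (z : R[i]) : 0 <= cmod z.
Proof. exact: sqrtr_ge0. Qed.

Lemma cmodR (c : R) : cmod c%:C = `|c|.
Proof. by rewrite /cmod /= expr0n /= addr0 sqrtr_sqr. Qed.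

Lemma cipD (u v w : 'rV[R[i]]_n) : cip (u + v) w = cip u w + cip v w.
Proof. by rewrite /cip -big_split; apply: eq_bigr => k _; rewrite !mxE mulrDl. Qed.

Lemma cipZ (c : R[i]) (u w : 'rV[R[i]]_n) : cip (c *: u) w = c * cip u w.
Proof. by rewrite /cip mulr_sumr; apply: eq_bigr => k _; rewrite !mxE mulrA. Qed.

Lemma cipB (u v w : 'rV[R[i]]_n) : cip (u - v) w = cip u w - cip v w.
Proof. by rewrite /cip -sumrB; apply: eq_bigr => k _; rewrite !mxE mulrBl. Qed.

Lemma vnorm_sq (u : 'rV[R[i]]_n) : vnorm u ^+ 2 = \sum_(k < n) cmod (u 0 k) ^+ 2.
Proof. by rewrite /vnorm sqr_sqrtr // sumr_ge0 // => k _; rewrite sqr_ge0. Qed.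

Lemma vnorm_ge0 (u : 'rV[R[i]]_n) : 0 <= vnorm u.
Proof. exact: sqrtr_ge0. Qed.

Lemma vnorm0 : vnorm (0 : 'rV[R[i]]_n) = 0.
Proof.
rewrite /vnorm big1 ?sqrtr0 // => k _; rewrite mxE.
by rewrite /cmod /= expr0n /= addr0 sqrtr0 expr0n.
Qed.

Lemma vnorm_eq0 (u : 'rV[R[i]]_n) : vnorm u = 0 -> u = 0.
Proof.
move=> h; have : vnorm u ^+ 2 = 0 by rewrite h expr0n.
rewrite vnorm_sq => /eqP; rewrite psumr_eq0; last by move=> k _; rewrite sqr_ge0.
move=> /allP hk; apply/rowP => k; rewrite mxE.
have := hk k (mem_index_enum k); rewrite cmod_sq.
case: (u 0 k) => a b /= /eqP hab.
have ha : a = 0 by apply/eqP; rewrite -sqrf_eq0; apply/eqP; nra.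
have hb : b = 0 by apply/eqP; rewrite -sqrf_eq0; apply/eqP; nra.
by rewrite ha hb.
Qed.

Lemma sqrt_le (S t : R) : 0 <= t -> S <= t ^+ 2 -> Num.sqrt S <= t.
Proof. by move=> t0 h; rewrite -(ger0_norm t0) -sqrtr_sqr ler_sqrt // sqr_ge0. Qed.

End H.



Lemma sum_sq_expand (R : realType) (J : finType) (f g : J -> R) (u v : R) :
  \sum_j (u * f j + v * g j) ^+ 2 =
  u ^+ 2 * \sum_j f j ^+ 2 + (2 * u * v) * \sum_j (f j * g j) + v ^+ 2 * \sum_j g j ^+ 2.
Proof.
rewrite (eq_bigr (fun j => u^+2 * f j^+2 + (2*u*v)*(f j * g j) + v^+2 * g j^+2)).
  by rewrite !big_split /= -!mulr_sumr.
by move=> j _; ring.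
Qed.

Section Main.
Variables (R : realType) (n : nat) (J : finType) (xs : J -> 'rV[R[i]]_n) (x y : 'rV[R[i]]_n).
Variables (A B : R).
Hypothesis hA : 0 < A.
Hypothesis hAB : A <= B.
Hypothesis hframe : forall v : 'rV[R[i]]_n,
      A * vnorm v ^+ 2 <= \sum_(j : J) cmod (cip v (xs j)) ^+ 2 /\
      \sum_(j : J) cmod (cip v (xs j)) ^+ 2 <= B * vnorm v ^+ 2.
Hypothesis hind : forall a b : R[i], a *: x + b *: y = 0 -> a = 0 /\ b = 0.
Hypothesis hx : forall j : J, cip x (xs j) \is Num.real.
Hypothesis hy : forall j : J, cip y (xs j) \is Num.real.

Let a j := complex.Re (cip x (xs j)).
Let b j := complex.Re (cip y (xs j)).

Lemma ha j : cip x (xs j) = (a j)%:C. Proof. by rewrite RRe_real. Qed.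
Lemma hb j : cip y (xs j) = (b j)%:C. Proof. by rewrite RRe_real. Qed.

Lemma indep_real p q : (forall j, p * a j + q * b j = 0) -> p = 0 /\ q = 0.
Proof.
move=> h.
pose w := p%:C *: x + q%:C *: y.
have cw j : cip w (xs j) = 0.
  rewrite cipD !cipZ ha hb; apply/eqP; rewrite eq_complex /=.
  by rewrite !mulr0 !mul0r !subr0 !addr0 h eqxx.
have [h1 _] := hframe w.
have : \sum_j cmod (cip w (xs j)) ^+ 2 = 0.
  by rewrite big1 // => j _; rewrite cw cmod_sq /= expr0n /= addr0.
move=> e; rewrite e in h1.
have hv : vnorm w = 0.
  have h2 : vnorm w ^+ 2 <= 0 by rewrite -(pmulr_rle0 _ hA).
  by apply/eqP; rewrite -sqrf_eq0 eq_le h2 sqr_ge0.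
have [/(congr1 (@complex.Re R)) /= hp /(congr1 (@complex.Re R)) /= hq] := hind (vnorm_eq0 hv).
by split.
Qed.

Lemma pos_sum p q : (p != 0) || (q != 0) -> 0 < \sum_j (p * a j + q * b j) ^+ 2.
Proof.
move=> hpq; rewrite lt_def sumr_ge0 ?andbT; last by move=> j _; rewrite sqr_ge0.
apply/negP => /eqP h.
have h0 := psumr_eq0P (fun j _ => sqr_ge0 (p * a j + q * b j)) h.
have [hp hq] : p = 0 /\ q = 0.
  apply: indep_real => j; apply/eqP; rewrite -sqrf_eq0; apply/eqP; exact: h0.
by move: hpq; rewrite hp hq eqxx.
Qed.

Definition alpha := 1 + \sum_j `|a j| / `|b j|.
Definition c j := a j + alpha * b j.

Lemma alpha_gt0 : 0 < alpha.
Proof. by rewrite /alpha ltr_pwDl // sumr_ge0 // => j _; rewrite divr_ge0. Qed.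

Lemma hc j : b j != 0 -> c j != 0.
Proof.
move=> hb0; apply/negP => /eqP hc0.
have hS : `|a j| / `|b j| <= \sum_k `|a k| / `|b k|.
  rewrite (bigD1 j) //= lerDl sumr_ge0 // => k _; rewrite divr_ge0 //.
have hbp : 0 < `|b j| by rewrite normr_gt0.
have ht : `|a j| / `|b j| * `|b j| = `|a j| by rewrite divfK // gt_eqF.
have haj : `|a j| = alpha * `|b j|.
  have -> : a j = - (alpha * b j) by apply/eqP; rewrite -addr_eq0 -/(c j) hc0.
  by rewrite normrN normrM gtr0_norm // alpha_gt0.
move: ht hS haj; rewrite /alpha.
set t := `|a j| / `|b j|; set S := \sum_k _; nra.
Qed.

Definition CC := \sum_j c j ^+ 2.
Definition MM := \sum_j c j * b j.
Definition NN := \sum_j b j ^+ 2.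
Definition DD := CC * NN - MM ^+ 2.

Lemma CC_gt0 : 0 < CC.
Proof.
have := @pos_sum 1 alpha; rewrite oner_eq0 /= => /(_ isT).
by rewrite /CC /c; under eq_bigr do rewrite mul1r.
Qed.

Lemma DD_gt0 : 0 < DD.
Proof.
have e1 : \sum_j (CC * b j + (- MM) * c j) ^+ 2 = CC * DD.
  rewrite sum_sq_expand.
  have -> : \sum_j (b j * c j) = MM by apply: eq_bigr => j _; rewrite mulrC.
  rewrite -/NN -/CC /DD; ring.
have e2 : \sum_j (CC * b j + (- MM) * c j) ^+ 2 =
          \sum_j ((- MM) * a j + (CC - MM * alpha) * b j) ^+ 2.
  by apply: eq_bigr => j _; rewrite /c; ring.
have hp : 0 < CC * DD.
  rewrite -e1 e2; apply: pos_sum.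
  have [->|hM] := eqVneq MM 0; last by rewrite oppr_eq0 hM.
  by rewrite oppr0 eqxx mul0r subr0 /= gt_eqF // CC_gt0.
by rewrite (pmulr_rgt0 _ CC_gt0) in hp.
Qed.

Definition z := 1 *: x + (alpha%:C) *: y.
Definition w (s : R) := z + (s *i) *: y.

Lemma cz j : cip z (xs j) = (c j)%:C.
Proof.
rewrite /z cipD !cipZ ha hb; apply/eqP; rewrite eq_complex /= /c.
by rewrite !mulr0 !mul0r !subr0 !addr0 mul1r !eqxx.
Qed.

Lemma cw s j : cip (w s) (xs j) = c j +i* (s * b j).
Proof.
rewrite /w cipD cipZ cz hb; apply/eqP; rewrite eq_complex /=.
by rewrite !mulr0 !mul0r !subr0 !addr0 !add0r !eqxx.
Qed.

Definition KK := \sum_j b j ^+ 2 / `|c j|.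
Definition LL := (#|J|%:R + 1) * KK.

Lemma KK_ge0 : 0 <= KK.
Proof. by rewrite sumr_ge0 // => j _; rewrite divr_ge0 // sqr_ge0. Qed.

Lemma dj_bound s j : 0 < s ->
  0 <= Num.sqrt (c j ^+ 2 + (s * b j) ^+ 2) - `|c j| <= s ^+ 2 * KK.
Proof.
move=> s0.
set r := Num.sqrt _.
have hr0 : 0 <= r := sqrtr_ge0 _.
have hr2 : r ^+ 2 = c j ^+ 2 + (s * b j) ^+ 2 by rewrite sqr_sqrtr // addr_ge0 // sqr_ge0.
have hc2 : `|c j| ^+ 2 = c j ^+ 2 by rewrite real_normK // num_real.
have hcn := normr_ge0 (c j).
have [hb0|hb0] := eqVneq (b j) 0.
  have hK := KK_ge0.
  have -> : r = `|c j| by rewrite /r hb0 mulr0 expr0n /= addr0 sqrtr_sqr.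
  rewrite subrr lexx /=; nra.
have hcp : 0 < `|c j| by rewrite normr_gt0 hc.
have hbK : b j ^+ 2 / `|c j| <= KK.
  rewrite /KK (bigD1 j) //= lerDl; apply: sumr_ge0 => k _; rewrite divr_ge0 // sqr_ge0 //.
have hrc : `|c j| <= r by nra.
apply/andP; split; first by rewrite subr_ge0.
have h1 : (r - `|c j|) <= s ^+ 2 * (b j ^+ 2 / `|c j|).
  rewrite mulrA ler_pdivlMr //; nra.
have hs2 : 0 <= s ^+ 2 by rewrite sqr_ge0.
apply: (le_trans h1); exact: ler_wpM2l.
Qed.

Lemma rdist_bound s : 0 < s ->
  rdist (absTheta xs z) (absTheta xs (w s)) <= s ^+ 2 * LL.
Proof.
move=> s0; rewrite /rdist.
have hK := KK_ge0.
have hs2 : 0 <= s ^+ 2 by rewrite sqr_ge0.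
apply: sqrt_le; first by rewrite /LL mulr_ge0 // mulr_ge0 // addr_ge0.
apply: (@le_trans _ _ (\sum_(j : J) (s ^+ 2 * KK) ^+ 2)).
  apply: ler_sum => j _.
  rewrite /absTheta cz cw cmodR.
  have /andP[h1 h2] := dj_bound j s0.
  rewrite /cmod /=.
  set r := Num.sqrt _ in h1 h2 *.
  have -> : (`|c j| - r) ^+ 2 = (r - `|c j|) ^+ 2 by ring.
  by rewrite ler_sqr // nnegrE // mulr_ge0.
rewrite sumr_const -mulr_natl /LL.
set m := (#|J|%:R : R).
have hm : 0 <= m by rewrite /m ler0n.
set X := s ^+ 2 * KK.
have -> : (s ^+ 2 * ((m + 1) * KK)) ^+ 2 = (m + 1) ^+ 2 * X ^+ 2 by rewrite /X; ring.
have hX : 0 <= X ^+ 2 by rewrite sqr_ge0.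
nra.
Qed.

Lemma B_gt0 : 0 < B.
Proof. exact: lt_le_trans hA hAB. Qed.

Definition kappa := Num.sqrt (DD / (CC * B)).

Lemma kappa_gt0 : 0 < kappa.
Proof.
rewrite /kappa sqrtr_gt0 divr_gt0 // ?DD_gt0 // mulr_gt0 // ?CC_gt0 //; exact: B_gt0.
Qed.

Lemma pd_term s l1 l2 j : l1 ^+ 2 + l2 ^+ 2 = 1 ->
  (l2 * c j + s * b j) ^+ 2 <= cmod (cip (z - (l1 +i* l2) *: w s) (xs j)) ^+ 2.
Proof.
move=> hl.
rewrite cipB cipZ cz cw cmod_sq /=.
have h' : (l1 ^+ 2 + l2 ^+ 2) * (s * b j) ^+ 2 = (s * b j) ^+ 2 by rewrite hl mul1r.
have h'' : 0 <= ((1 - l1) * c j) ^+ 2 by rewrite sqr_ge0.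
nra.
Qed.

Lemma pd_lower s l : 0 < s -> cmod l = 1 -> s * kappa <= vnorm (z - l *: w s).
Proof.
move=> s0; case: l => l1 l2 hl.
have hl2 : l1 ^+ 2 + l2 ^+ 2 = 1.
  by have := cmod_sq (l1 +i* l2); rewrite hl expr1n /= => ->.
set v := z - _ *: _.
have [_ hB] := hframe v.
have hQ : \sum_j (l2 * c j + s * b j) ^+ 2 <= B * vnorm v ^+ 2.
  apply: le_trans hB; apply: ler_sum => j _; exact: pd_term.
rewrite sum_sq_expand -/CC -/NN -/MM in hQ.
have hC := CC_gt0; have hD := DD_gt0; have hBp := B_gt0.
have hCQ : s ^+ 2 * DD <= CC * (l2 ^+ 2 * CC + 2 * l2 * s * MM + s ^+ 2 * NN).
  have -> : CC * (l2 ^+ 2 * CC + 2 * l2 * s * MM + s ^+ 2 * NN) =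
            (l2 * CC + s * MM) ^+ 2 + s ^+ 2 * DD by rewrite /DD; ring.
  by rewrite lerDr sqr_ge0.
have hk2 : kappa ^+ 2 * (CC * B) = DD.
  rewrite /kappa sqr_sqrtr ?divfK //; last first.
    by rewrite divr_ge0 // ?mulr_ge0 // ltW.
  by rewrite gt_eqF // mulr_gt0.
have hk0 := ltW kappa_gt0.
rewrite -ler_sqr ?nnegrE ?vnorm_ge0 //; last by rewrite mulr_ge0 // ltW.
have hv2 := sqr_ge0 (vnorm v).
set V := vnorm v ^+ 2 in hQ hv2 *.
set Q := l2 ^+ 2 * CC + 2 * l2 * s * MM + s ^+ 2 * NN in hQ hCQ.
rewrite exprMn.
have : s ^+ 2 * kappa ^+ 2 * (CC * B) <= CC * (B * V).
  rewrite -mulrA hk2; apply: le_trans hCQ _; rewrite ler_wpM2l // ltW //.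
set k2 := kappa ^+ 2; set s2 := s ^+ 2.
move=> h; have hCB : 0 < CC * B by rewrite mulr_gt0.
have e : CC * (B * V) = V * (CC * B) by ring.
rewrite e in h.
by rewrite -(ler_pM2r hCB).
Qed.

Lemma cmod1 : cmod (1 : R[i]) = 1.
Proof. by rewrite /cmod /= expr1n expr0n /= addr0 sqrtr1. Qed.

Lemma pd_inf s : 0 < s -> s * kappa <= phase_dist z (w s).
Proof.
move=> s0; rewrite /phase_dist; apply: lb_le_inf.
  by exists (vnorm (z - 1 *: w s)); exists 1 => //; exact: cmod1.
by move=> _ [l hl <-]; exact: pd_lower.
Qed.

Lemma not_same s : 0 < s -> ~ same_phase_class (w s) z.
Proof.
move=> s0 [l [hl he]].
have hl0 : l != 0 by apply/negP => /eqP h0; move: hl; rewrite h0 /cmod /= expr0n /= addr0 sqrtr0 => /eqP; rewrite eq_sym oner_eq0.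
have hli : cmod l^-1 = 1.
  move: hl hl0; case: l {he} => l1 l2 hl hl0.
  have hl2 : l1 ^+ 2 + l2 ^+ 2 = 1.
    by have := cmod_sq (l1 +i* l2); rewrite hl expr1n /= => ->.
  rewrite /cmod /= hl2 invr1 !mulr1 sqrrN hl2 sqrtr1 //.
have := pd_lower s0 hli.
rewrite he scalerA mulVf // scale1r subrr vnorm0.
have := kappa_gt0; nra.
Qed.

Lemma vnorm_ws s : 0 < s -> vnorm (w s - z) = s * vnorm y.
Proof.
move=> s0; rewrite /w (addrC z) addrK /vnorm.
rewrite (eq_bigr (fun k => s ^+ 2 * cmod (y 0 k) ^+ 2)); last first.
  move=> k _; rewrite mxE !cmod_sq; case: (y 0 k) => u v /=; ring.
by rewrite -mulr_sumr sqrtrM ?sqr_ge0 // sqrtr_sqr ger0_norm // ltW.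
Qed.

Lemma main_res : exists z' : 'rV[R[i]]_n,
    (exists a b : R[i], z' = a *: x + b *: y) /\ ~ stable_near xs z'.
Proof.
exists z; split; first by exists 1, alpha%:C.
move=> [C0 [hC0 hst]].
have [delta [hd hw]] := hst (2^-1) (ltac:(by rewrite invr_gt0)).
have hk := kappa_gt0.
have hL : 0 <= LL by rewrite /LL mulr_ge0 // ?KK_ge0 // addr_ge0.
have hy0 := vnorm_ge0 y.
pose s1 := delta / (vnorm y + 1).
pose t := kappa / (2 * C0 * (LL + 1)).
have hs1 : s1 * (vnorm y + 1) = delta by rewrite /s1 divfK // gt_eqF // ltr_pwDr.
have ht : t * (2 * C0 * (LL + 1)) = kappa.
  by rewrite /t divfK // gt_eqF // mulr_gt0 // ?mulr_gt0 // ltr_pwDr.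
have hs1p : 0 < s1 by rewrite divr_gt0 // ltr_pwDr.
have htp : 0 < t by rewrite divr_gt0 // ?mulr_gt0 // ltr_pwDr.
pose s0 := Num.min s1 t / 2.
have hm1 : Num.min s1 t <= s1 by rewrite ge_min lexx.
have hm2 : Num.min s1 t <= t by rewrite ge_min lexx orbT.
have hm0 : 0 < Num.min s1 t by rewrite lt_min hs1p htp.
have hs0 : 0 < s0 by rewrite divr_gt0.
have e0 : s0 * 2 = Num.min s1 t by rewrite /s0 divfK // pnatr_eq0.
have hclose : vnorm (w s0 - z) < delta.
  rewrite vnorm_ws // -hs1; nra.
have := hw _ hclose (not_same hs0).
rewrite /Psi.
set r := rdist _ _; set p := phase_dist _ _.
have hr : r <= s0 ^+ 2 * LL := rdist_bound hs0.
have hp : s0 * kappa <= p := pd_inf hs0.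
have hp0 : 0 < p by apply: lt_le_trans hp; rewrite mulr_gt0.
have hr0 : 0 <= r by rewrite /r /rdist sqrtr_ge0.
have hPsi : r / p * kappa <= s0 * LL.
  rewrite mulrAC ler_pdivrMr //.
  have : s0 * LL * (s0 * kappa) <= s0 * LL * p by rewrite ler_wpM2l // mulr_ge0 // ltW.
  have : r * kappa <= s0 ^+ 2 * LL * kappa by rewrite ler_wpM2r // ltW.
  nra.
have hPsi0 : 0 <= r / p by rewrite divr_ge0 // ltW.
move: hPsi hPsi0; set P := r / p => hPsi hPsi0 h.
have h2 : 2^-1 * 2 = 1 :> R by rewrite mulVf // pnatr_eq0.
have h3 : C0 * P * kappa <= C0 * (s0 * LL) by rewrite -mulrA ler_wpM2l // ltW.
have hu : 0 < 2 * C0 * (LL + 1) by rewrite mulr_gt0 // ?mulr_gt0 // ltr_pwDr.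
have h4 : s0 * 2 * (2 * C0 * (LL + 1)) <= kappa.
  by rewrite -ht; apply: ler_wpM2r; [exact: ltW hu | rewrite e0].
have h5 : 1 <= 2 * (C0 * P) by lra.
have h6 : kappa <= 2 * (C0 * (s0 * LL)).
  apply: (@le_trans _ _ (2 * (C0 * P * kappa))); last by rewrite ler_wpM2l.
  by rewrite mulrA -[X in X <= _]mul1r ler_wpM2r // ltW.
have hY : 0 < C0 * s0 by rewrite mulr_gt0.
have hX : 0 <= C0 * s0 * LL by rewrite mulr_ge0 // ltW.
have e7 : s0 * 2 * (2 * C0 * (LL + 1)) = 4 * (C0 * s0 * LL) + 4 * (C0 * s0) by ring.
have e8 : 2 * (C0 * (s0 * LL)) = 2 * (C0 * s0 * LL) by ring.
rewrite e7 in h4; rewrite e8 in h6.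
lra.
Qed.

End Main.

Theorem theorem4p3 (R : realType) (n : nat) (J : finType)
    (xs : J -> 'rV[R[i]]_n) (x y : 'rV[R[i]]_n) :
  (2 <= n)%N ->
  is_frame xs ->
  (forall a b : R[i], a *: x + b *: y = 0 -> a = 0 /\ b = 0) ->
  (forall j : J, cip x (xs j) \is Num.real) ->
  (forall j : J, cip y (xs j) \is Num.real) ->
  exists z : 'rV[R[i]]_n,
    (exists a b : R[i], z = a *: x + b *: y) /\ ~ stable_near xs z.
Proof.
move=> _ [A [B [hA [hAB hF]]]] hind hx hy.
exact: (main_res hA hAB hF hind hx hy).
Qed.
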